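(* Let $G=(V,E)$ be a connected almost bipartite permutation graph. Then every hole in $G$ is a dominating set of $G$ (every vertex of $G$ lies on the hole or has a neighbor on it).
   Context: All graphs are finite, simple, undirected. A hole is an induced cycle on at least five vertices. $K_3$ is the triangle and $C_k$ the cycle on $k$ vertices. $T_2$ is the tree on 7 vertices obtained from the claw $K_{1,3}$ by subdividing each of its three edges once. $X_2$ is the 7-vertex graph obtained from a 4-cycle by attaching one new pendant vertex to each of three of its four vertices. $X_3$ is the 7-vertex graph obtained from the domino (two 4-cycles sharing exactly one edge, 6 vertices) by attaching one new pendant vertex to one endpoint of the shared edge. A graph is an almost bipartite permutation graph if it contains none of $T_2, X_2, X_3, K_3, C_5, C_6, C_7, C_8, C_9$ as an induced subgraph. *)

(* Defs.v *)
From mathcomp Require Import all_boot.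
Set Implicit Arguments. Unset Strict Implicit. Unset Printing Implicit Defensive.

Definition simple_graph (T : finType) (e : rel T) : Prop :=
  irreflexive e /\ symmetric e.

Definition connected_graph (T : finType) (e : rel T) : Prop :=
  forall x y : T, connect e x y.

Definition has_induced (T : finType) (e : rel T) (n : nat) (h : rel 'I_n) : Prop :=
  exists f : 'I_n -> T, injective f /\ forall i j : 'I_n, e (f i) (f j) = h i j.

Definition graph_of_edges (n : nat) (l : seq (nat * nat)) : rel 'I_n :=
  fun i j => ((nat_of_ord i, nat_of_ord j) \in l) || ((nat_of_ord j, nat_of_ord i) \in l).

Definition cycle_graph (k : nat) : rel (ordinal k) :=
  fun i j => (j == (i.+1 %% k) :> nat) || (i == (j.+1 %% k) :> nat).

Definition K3 : rel (ordinal 3) := @cycle_graph 3.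

(* T2: centre 0, subdivision vertices 1 2 3, leaves 4 5 6. *)
Definition T2 : rel 'I_7 :=
  @graph_of_edges 7 [:: (0,1); (0,2); (0,3); (1,4); (2,5); (3,6)].

(* X2: 4-cycle 0-1-2-3-0 with pendants 4 at 0, 5 at 1, 6 at 2. *)
Definition X2 : rel 'I_7 :=
  @graph_of_edges 7 [:: (0,1); (1,2); (2,3); (3,0); (0,4); (1,5); (2,6)].

(* X3: domino with rows 0-1-2 and 3-4-5, rungs 0-3, 1-4, 2-5 (shared edge 1-4),
   plus pendant 6 attached to 1. *)
Definition X3 : rel 'I_7 :=
  @graph_of_edges 7 [:: (0,1); (1,2); (3,4); (4,5); (0,3); (1,4); (2,5); (1,6)].

Definition almost_bipartite_permutation (T : finType) (e : rel T) : Prop :=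
  ~ has_induced e T2 /\ ~ has_induced e X2 /\ ~ has_induced e X3 /\
  ~ has_induced e K3 /\
  ~ has_induced e (@cycle_graph 5) /\ ~ has_induced e (@cycle_graph 6) /\
  ~ has_induced e (@cycle_graph 7) /\ ~ has_induced e (@cycle_graph 8) /\
  ~ has_induced e (@cycle_graph 9).

Definition is_hole (T : finType) (e : rel T) (H : {set T}) : Prop :=
  exists (k : nat) (f : 'I_k -> T),
    5 <= k /\ injective f /\ (forall i j : 'I_k, e (f i) (f j) = @cycle_graph k i j) /\
    H = [set f i | i : 'I_k].

Definition dominating (T : finType) (e : rel T) (D : {set T}) : Prop :=
  forall v : T, v \in D \/ exists2 u, u \in D & e v u.

(* Main.v *)
Require Import Defs.
From mathcomp Require Import all_boot.
From mathcomp Require Import zify.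

Section Aux.
Variables (T : finType) (e : rel T).

Lemma inj_check n (h : rel 'I_n) (hn : nat -> nat -> bool)
  (Hh : forall i j : 'I_n, h i j = hn i j)
  (chk : all (fun i => all (fun j => (i == j) ||
           has (fun l => hn i l != hn j l) (iota 0 n)) (iota 0 n)) (iota 0 n))
  (f : 'I_n -> T) (He : forall i j, e (f i) (f j) = h i j) : injective f.
Proof.
move=> i j fij; apply: val_inj => /=.
have /allP/(_ i) := chk; rewrite mem_iota /= add0n ltn_ord => /(_ isT).
move=> /allP/(_ j); rewrite mem_iota /= add0n ltn_ord => /(_ isT).
case/orP => [/eqP // | /hasP [l]]; rewrite mem_iota add0n /= => ln.
have := He i (Ordinal ln); rewrite fij He !Hh /= => ->.
by rewrite eqxx.
Qed.

Lemma path_lemma (D : pred T) x p : ~~ D x -> D (last x p) -> path e x p ->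
  exists w u, [/\ ~~ D w, D u & e w u].
Proof.
elim: p x => [|y p IH] x /= nDx.
  by rewrite (negbTE nDx).
move=> Dl /andP [exy pp].
case Dy: (D y); first by exists x, y; rewrite Dy.
by apply: (IH y) => //; rewrite Dy.
Qed.

End Aux.
Lemma modeq k N x y : x < y + k -> y < x + k -> ((N + x) %% k == (N + y) %% k) = (x == y).
Proof.
wlog le: x y / x <= y.
  move=> W h1 h2; case: (leqP x y) => [le|lt]; first exact: W.
  rewrite eq_sym [x == y]eq_sym; apply: W => //; exact: ltnW.
move=> _ h2; rewrite -(subnKC le) addnA -{1}[N + x]addn0 eqn_modDl mod0n.
have dk : y - x < k by lia.
rewrite modn_small //; apply/idP/idP => /eqP h; apply/eqP; lia.
Qed.
Lemma modS k m : (m %% k).+1 %% k = m.+1 %% k.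
Proof. by rewrite -addn1 modnDml addn1. Qed.
Lemma cyc_e k N a b (k0 : 0 < k) : a.+1 < b + k -> b.+1 < a + k ->
 cycle_graph (Ordinal (ltn_pmod (N+a) k0)) (Ordinal (ltn_pmod (N+b) k0)) = (b == a.+1) || (a == b.+1).
Proof.
move=> h1 h2; rewrite /cycle_graph /= !modS -!addnS !modeq //; lia.
Qed.
Ltac e7 := move=> [[|[|[|[|[|[|[|//]]]]]]] ?] [[|[|[|[|[|[|[|//]]]]]]] ?] /=.

Lemma core (T : finType) (e : rel T) (irr : irreflexive e) (sym : symmetric e)
  (c : nat -> T) (u w : T) (k : nat) :
 6 <= k ->
 (forall a b, a.+1 < b + k -> b.+1 < a + k -> e (c a) (c b) = (b == a.+1) || (a == b.+1)) ->
 (forall n, e w (c n) = false) -> e w u -> e u (c 3) ->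
 ~ has_induced e K3 -> ~ has_induced e T2 -> ~ has_induced e X2 -> False.
Proof.
move=> k6 ccE Ew Ewu Eu3 nK3 nT2 nX2.
have tri a b d : e a b -> e b d -> e a d -> False.
  move=> ab bd ad; apply: nK3.
  have ba : e b a by rewrite sym.
  have db : e d b by rewrite sym.
  have da : e d a by rewrite sym.
  have He : forall i j : 'I_3, e (nth a [:: a; b; d] i) (nth a [:: a; b; d] j) = K3 i j.
    move=> [[|[|[|//]]] ?] [[|[|[|//]]] ?] /=; by rewrite ?irr ?ab ?bd ?ad ?ba ?db ?da.
  exists (fun i : 'I_3 => nth a [:: a; b; d] i); split => //.
  exact: (@inj_check T e 3 K3 (fun i j => (j == (i.+1 %% 3)) || (i == (j.+1 %% 3))) (fun _ _ => erefl) erefl _ He).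
have Ecc a b : a.+1 < b + k -> b.+1 < a + k -> e (c a) (c b) = (b == a.+1) || (a == b.+1) := ccE a b.
have sideL x y : x < y + 6 -> x < y + k.
  by move=> h; apply: leq_trans h _; rewrite leq_add2l.
have Euw : e u w by rewrite sym.
have E3u : e (c 3) u by rewrite sym.
have Ewc n : e (c n) w = false by rewrite sym.
have u2 : e u (c 2) = false.
  apply/negP => h; apply: (tri u (c 2) (c 3)) => //; by rewrite Ecc // ?sideL.
have u4 : e u (c 4) = false.
  apply/negP => h; apply: (tri u (c 4) (c 3)) => //; by rewrite Ecc // ?sideL.
have u2' : e (c 2) u = false by rewrite sym.
have u4' : e (c 4) u = false by rewrite sym.
case u5: (e u (c 5)).
  have u6 : e u (c 6) = false.
    apply/negP => h; apply: (tri u (c 6) (c 5)) => //; by rewrite Ecc // ?sideL.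
  have u5' : e (c 5) u by rewrite sym.
  have u6' : e (c 6) u = false by rewrite sym.
  apply: nX2.
  set s := [:: c 3; u; c 5; c 4; c 2; w; c 6].
  have He : forall i j : 'I_7, e (nth u s i) (nth u s j) = X2 i j.
    e7; first [ by rewrite ?irr ?Ew ?Ewc ?Ewu ?Euw ?Eu3 ?E3u ?u2 ?u4 ?u2' ?u4' ?u5 ?u5' ?u6 ?u6'
              | by rewrite Ecc // ?sideL ].
  exists (fun i : 'I_7 => nth u s i); split => //.
  exact: (@inj_check T e 7 _ (fun i j => ((i, j) \in [:: (0,1); (1,2); (2,3); (3,0); (0,4); (1,5); (2,6)]) || ((j, i) \in [:: (0,1); (1,2); (2,3); (3,0); (0,4); (1,5); (2,6)])) (fun _ _ => erefl) erefl _ He).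
case u1: (e u (c 1)).
  have u0 : e u (c 0) = false.
    apply/negP => h; apply: (tri u (c 0) (c 1)) => //; by rewrite Ecc // ?sideL.
  have u1' : e (c 1) u by rewrite sym.
  have u0' : e (c 0) u = false by rewrite sym.
  apply: nX2.
  set s := [:: c 3; u; c 1; c 2; c 4; w; c 0].
  have He : forall i j : 'I_7, e (nth u s i) (nth u s j) = X2 i j.
    e7; first [ by rewrite ?irr ?Ew ?Ewc ?Ewu ?Euw ?Eu3 ?E3u ?u2 ?u4 ?u2' ?u4' ?u1 ?u1' ?u0 ?u0'
              | by rewrite Ecc // ?sideL ].
  exists (fun i : 'I_7 => nth u s i); split => //.
  exact: (@inj_check T e 7 _ (fun i j => ((i, j) \in [:: (0,1); (1,2); (2,3); (3,0); (0,4); (1,5); (2,6)]) || ((j, i) \in [:: (0,1); (1,2); (2,3); (3,0); (0,4); (1,5); (2,6)])) (fun _ _ => erefl) erefl _ He).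
have u5' : e (c 5) u = false by rewrite sym.
have u1' : e (c 1) u = false by rewrite sym.
apply: nT2.
set s := [:: c 3; c 2; c 4; u; c 1; c 5; w].
have He : forall i j : 'I_7, e (nth u s i) (nth u s j) = T2 i j.
  e7; first [ by rewrite ?irr ?Ew ?Ewc ?Ewu ?Euw ?Eu3 ?E3u ?u2 ?u4 ?u2' ?u4' ?u1 ?u1' ?u5 ?u5'
            | by rewrite Ecc // ?sideL ].
exists (fun i : 'I_7 => nth u s i); split => //.
exact: (@inj_check T e 7 _ (fun i j => ((i, j) \in [:: (0,1); (0,2); (0,3); (1,4); (2,5); (3,6)]) || ((j, i) \in [:: (0,1); (0,2); (0,3); (1,4); (2,5); (3,6)])) (fun _ _ => erefl) erefl _ He).
Qed.

Theorem proposition3p3 (T : finType) (e : rel T) :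
  simple_graph e -> connected_graph e -> almost_bipartite_permutation e ->
  forall H : {set T}, is_hole e H -> dominating e H.
Proof.
move=> [irr sym] conn [nT2 [nX2 [nX3 [nK3 [nC5 _]]]]] H [k [f [k5 [finj [fe ->]]]]].
set S := [set f i | i : 'I_k].
pose D := fun x => (x \in S) || [exists y in S, e x y].
move=> v; case Dv: (D v).
  case/orP: Dv => [|/existsP [y /andP [yS ev]]]; [by left | by right; exists y].
exfalso.
have k0 : 0 < k by apply: leq_trans k5.
have [p pth lst] := connectP (conn v (f (Ordinal k0))).
have [w [u [nDw Du ewu]]] : exists w u, [/\ ~~ D w, D u & e w u].
  apply: (@path_lemma T e D v p) => //; first by rewrite Dv.
  by rewrite -lst /D; apply/orP; left; apply/imsetP; exists (Ordinal k0).
case/orP: Du => [uS | /existsP [y /andP [yS euy]]].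
  by move/negP: nDw; apply; apply/orP; right; apply/existsP; exists u; rewrite uS ewu.
case/imsetP: yS => i _ yE; subst y.
have k6 : 6 <= k.
  move: k5; rewrite leq_eqVlt => /orP [/eqP k5e|//].
  by subst k; exfalso; apply: nC5; exists f.
pose g n := f (Ordinal (ltn_pmod n k0)).
pose N := i + (k - 3).
apply: (@core T e irr sym (fun n => g (N + n)) u w k k6) => //.
- by move=> a b h1 h2; rewrite /g fe cyc_e.
- move=> n; apply/negP => h; move/negP: nDw; apply; apply/orP; right.
  apply/existsP; exists (g (N + n)); rewrite h andbT.
  by apply/imsetP; exists (Ordinal (ltn_pmod (N + n) k0)).
- suff -> : g (N + 3) = f i by [].
  rewrite /g /N; congr f; apply: val_inj => /=.
  rewrite -addnA subnK; last by apply: leq_trans k6.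
  by rewrite modnDr modn_small.
Qed.
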